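(* Let $A \in S(2n,\mathbb{R})$ and $0\le k\le n-1$. For a subset $S\subseteq\{1,\dots,n\}$ with $|S| = k$, let $A_S$ be the $(2n-2k)\times(2n-2k)$ submatrix of $A$ obtained by deleting rows and columns $2i-1$ and $2i$ for all $i\in S$, and set $s_k(A) = \sum_{S\subseteq\{1,\dots,n\},\,|S|=k}\operatorname{Pf}(A_S)$. Then for every $P \in \operatorname{Sp}(2n)$, $s_k(P^T A P) = s_k(A)$.
   Context: $S(2n,\mathbb{R}) = \{A \in M(2n,\mathbb{R}) : A^T = -A,\ \det A\neq 0\}$. $J$ is the $2n\times 2n$ block-diagonal matrix with $n$ diagonal blocks $J_0 = \begin{bmatrix} 0 & 1 \\ -1 & 0\end{bmatrix}$, and $\operatorname{Sp}(2n) = \{P\in M(2n,\mathbb{R}) : P^T J P = J\}$. For a skew-symmetric $2m\times 2m$ matrix $B$, $\operatorname{Pf}(B) = \frac{1}{2^m m!}\sum_{\sigma\in S_{2m}}\operatorname{sgn}(\sigma)\prod_{i=1}^m B_{\sigma(2i-1),\sigma(2i)}$. *)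

(* Defs.v *)
From HB Require Import structures.
From mathcomp Require Import all_boot all_order all_algebra all_fingroup.
From mathcomp Require Import reals.
Set Implicit Arguments. Unset Strict Implicit. Unset Printing Implicit Defensive.
Import Order.TTheory GRing.Theory Num.Theory.
Local Open Scope ring_scope.

(* Indices are 0-based: the paper's index 2i-1, 2i (i = 1..n) become
   2i, 2i+1 (i = 0..n-1). *)

Section Defs.
Variable R : realType.

(* Symplectic form J = diag(J0,...,J0), J0 = [[0,1],[-1,0]]. *)
Definition Jmx (n : nat) : 'M[R]_(n.*2) :=
  \matrix_(i, j) if (i./2 == j./2)%N then
                   (if odd i then (if odd j then 0 else -1)
                    else (if odd j then 1 else 0))
                 else 0.

(* Entry of B at natural-number positions (0 out of range). *)
Definition mxn (N : nat) (B : 'M[R]_N) (k l : nat) : R :=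
  match (insub k : option 'I_N), (insub l : option 'I_N) with
  | Some a, Some b => B a b
  | _, _ => 0
  end.

Definition pf_term (N : nat) (B : 'M[R]_N) (s : 'S_N) (i : nat) : R :=
  match (insub i.*2 : option 'I_N), (insub i.*2.+1 : option 'I_N) with
  | Some a, Some b => B (s a) (s b)
  | _, _ => 0
  end.

Definition Pfaff (N : nat) (B : 'M[R]_N) : R :=
  (2 ^+ N./2 * (N./2)`!%:R)^-1 *
  \sum_(s : 'S_N) (-1) ^+ s * \prod_(i < N./2) pf_term B s i.

Definition kept_idx (n : nat) (S : {set 'I_n}) : seq nat :=
  [seq j <- iota 0 n.*2 | ~~ [exists i in S, nat_of_ord i == j./2]].

Definition subA (n : nat) (A : 'M[R]_(n.*2)) (S : {set 'I_n}) :
    'M[R]_(size (kept_idx S)) :=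
  \matrix_(a, b) mxn A (nth 0%N (kept_idx S) a) (nth 0%N (kept_idx S) b).

Definition s_k (n k : nat) (A : 'M[R]_(n.*2)) : R :=
  \sum_(S : {set 'I_n} | #|S| == k) Pfaff (subA A S).

End Defs.

(* Main.v *)
Require Import Defs.
From HB Require Import structures.
From mathcomp Require Import all_boot all_order all_algebra all_fingroup.
From mathcomp Require Import reals.
From mathcomp Require Import zify ring.
Set Implicit Arguments. Unset Strict Implicit. Unset Printing Implicit Defensive.
Import Order.TTheory GRing.Theory Num.Theory.
Local Open Scope ring_scope.

Section Work.
Variable R : realType.

Definition ev m (i : 'I_m) : 'I_(m.*2) := Ordinal (etrans (ltn_double i m) (ltn_ord i)).
Definition od m (i : 'I_m) : 'I_(m.*2) := Ordinal (etrans (ltn_Sdouble i m) (ltn_ord i)).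
Definition hf m (x : 'I_(m.*2)) : 'I_m := Ordinal (etrans (ltn_half_double x m) (ltn_ord x)).

Lemma hf_ev m (i : 'I_m) : hf (ev i) = i.
Proof. by apply: val_inj => /=; rewrite doubleK. Qed.
Lemma hf_od m (i : 'I_m) : hf (od i) = i.
Proof. by apply: val_inj => /=; exact: (half_bit_double i true). Qed.
Lemma ev_hf m (x : 'I_(m.*2)) : ~~ odd x -> ev (hf x) = x.
Proof. by move=> ox; apply: val_inj => /=; rewrite -{2}(odd_double_half x) (negbTE ox). Qed.
Lemma od_hf m (x : 'I_(m.*2)) : odd x -> od (hf x) = x.
Proof. by move=> ox; apply: val_inj => /=; rewrite -{2}(odd_double_half x) ox. Qed.

Definition pfsum N (B : 'M[R]_N) m :=
  \sum_(s : 'S_N) (-1) ^+ s * \prod_(i < m) pf_term B s i.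

Definition ps m (B : 'M[R]_(m.*2)) :=
  \sum_(s : 'S_(m.*2)) (-1) ^+ s * \prod_(i < m) B (s (ev i)) (s (od i)).

Lemma odd_ev m (i : 'I_m) : odd (ev i) = false.
Proof. exact: odd_double. Qed.
Lemma odd_od m (i : 'I_m) : odd (od i) = true.
Proof. by rewrite /= odd_double. Qed.

Lemma pf_termE N (B : 'M[R]_N) s (i : nat) (a b : 'I_N) :
  val a = i.*2 -> val b = i.*2.+1 -> pf_term B s i = B (s a) (s b).
Proof. by move=> ha hb; rewrite /pf_term -hb -ha !valK. Qed.

Lemma pfsum_ps m (B : 'M[R]_(m.*2)) : pfsum B m = ps B.
Proof.
apply: eq_bigr => s _; congr (_ * _); apply: eq_bigr => i _.
exact: pf_termE.
Qed.

Lemma prod_nat_pairs (G : nat -> R) m :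
  \prod_(0 <= x < m.*2) G x = \prod_(0 <= i < m) (G i.*2 * G i.*2.+1).
Proof.
elim: m => [|m IH]; first by rewrite !big_geq.
rewrite doubleS big_nat_recr // big_nat_recr // IH.
by rewrite big_nat_recr //= mulrA.
Qed.

Lemma prod_pairs m (G : 'I_(m.*2) -> R) :
  \prod_x G x = \prod_(i < m) (G (ev i) * G (od i)).
Proof.
pose G' (x : nat) := if insub x is Some o then G o else 1.
have HG (x : 'I_(m.*2)) : G x = G' x by rewrite /G' valK.
rewrite (eq_bigr (fun x : 'I_(m.*2) => G' x)) => [|x _]; last exact: HG.
transitivity (\prod_(0 <= x < m.*2) G' x); first by rewrite big_mkord.
rewrite prod_nat_pairs big_mkord.
by apply: eq_bigr => i _; rewrite !HG.
Qed.

Definition hof m (g : {ffun 'I_(m.*2) -> 'I_(m.*2)}) : {ffun 'I_m -> 'I_(m.*2) * 'I_(m.*2)} :=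
  [ffun i => (g (ev i), g (od i))].
Definition gof m (h : {ffun 'I_m -> 'I_(m.*2) * 'I_(m.*2)}) : {ffun 'I_(m.*2) -> 'I_(m.*2)} :=
  [ffun x : 'I_(m.*2) => if odd x then (h (hf x)).2 else (h (hf x)).1].

Lemma hofK m : cancel (@hof m) (@gof m).
Proof.
move=> g; apply/ffunP => x; rewrite !ffunE.
by case: ifP => ox; rewrite /= ?od_hf ?ev_hf ?ox.
Qed.
Lemma gofK m : cancel (@gof m) (@hof m).
Proof.
move=> h; apply/ffunP => i; rewrite !ffunE /= hf_ev hf_od /= odd_double.
by case: (h i).
Qed.

Lemma ps_congr m (B P : 'M[R]_(m.*2)) : ps (P^T *m B *m P) = \det P * ps B.
Proof.
rewrite /ps.
pose F (s : 'S_(m.*2)) (i : 'I_m) (p : 'I_(m.*2) * 'I_(m.*2)) :=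
  P p.1 (s (ev i)) * B p.1 p.2 * P p.2 (s (od i)).
transitivity (\sum_(s : 'S_(m.*2)) (-1) ^+ s *
  \sum_(g : {ffun 'I_(m.*2) -> 'I_(m.*2)})
     (\prod_(i < m) B (g (ev i)) (g (od i)) * \prod_x P (g x) (s x))).
  apply: eq_bigr => s _; congr (_ * _).
  transitivity (\prod_(i < m) \sum_p F s i p).
    apply: eq_bigr => i _.
    transitivity (\sum_k \sum_l F s i (k,l)); last first.
      by rewrite pair_bigA; apply: eq_bigr => -[k l].
    rewrite mxE; under eq_bigr do rewrite mxE big_distrl /=.
    rewrite exchange_big /=; apply: eq_bigr => k _.
    by apply: eq_bigr => l _; rewrite mxE /F /=.
  rewrite bigA_distr_bigA (reindex (@hof m)) /=; last first.
    by exists (@gof m) => x _; rewrite ?hofK ?gofK.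
  apply: eq_bigr => g _; rewrite prod_pairs -big_split /=.
  apply: eq_bigr => i _; rewrite /F !ffunE /=.
  by rewrite -mulrA mulrC -mulrA [X in _ * X]mulrC.
under eq_bigr do rewrite big_distrr /=.
rewrite exchange_big /=.
transitivity (\sum_(g : {ffun 'I_(m.*2) -> 'I_(m.*2)})
   (\prod_(i < m) B (g (ev i)) (g (od i)) * \det (\matrix_(x, y) P (g x) y))).
  apply: eq_bigr => g _; rewrite /determinant big_distrr /=.
  apply: eq_bigr => s _; rewrite mulrCA; congr (_ * (_ * _)).
  by apply: eq_bigr => x _; rewrite mxE.
rewrite (bigID (fun f : {ffun 'I_(m.*2) -> 'I_(m.*2)} => injectiveb f)) /=.
rewrite [X in _ + X]big1 ?addr0 => [|f Uf]; last first.
  case/injectivePn: Uf => i1 [i2 Di12 Ef12].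
  by rewrite (determinant_alternate Di12) ?mulr0 //= => j; rewrite !mxE Ef12.
rewrite (reindex (@pval _)) /=; last first.
  pose in_Sn := insubd (1%g : 'S_(m.*2)).
  by exists in_Sn => /= f Uf; first apply: val_inj; apply: insubdK.
rewrite big_distrr; apply: eq_big => /= [s | s _]; first by rewrite (valP s).
have -> : \matrix_(x, y) P (pval s x) y = row_perm s P.
  by apply/matrixP => x y; rewrite !mxE pvalE.
rewrite row_permE det_mulmx det_perm.
under eq_bigr do rewrite pvalE.
by rewrite mulrCA mulrA mulrC.
Qed.


Lemma bump_pair (i l a c : nat) : (a == i.*2) || (a == i.*2.+1) -> (c <= 1)%N ->
  bump a (bump i.*2 (l.*2 + c)) = ((bump i l).*2 + c)%N.
Proof. rewrite /bump => /orP [] /eqP ->; case: (leqP i l) => h /=; lia. Qed.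

Lemma prod_add1 (I : finType) (x e : I -> R) (t : R) :
  (forall i j, i != j -> e i != 0 -> e j = 0) ->
  \prod_i (x i + t * e i) = \prod_i x i + t * \sum_i e i * \prod_(j | j != i) x j.
Proof.
move=> He; case: (pickP (fun i => e i != 0)) => [i ei | none].
  rewrite [LHS](bigD1 i) //= [\prod_j x j](bigD1 i) //= [\sum_j _](bigD1 i) //=.
  rewrite [X in _ = _ + _ * (_ + X)]big1 ?addr0 => [|j ji]; last first.
    by rewrite eq_sym in ji; rewrite (He _ _ ji ei) mul0r.
  rewrite (eq_bigr x) => [|j ji]; last by rewrite eq_sym in ji; rewrite (He _ _ ji ei) mulr0 addr0.
  by rewrite mulrDl mulrA.
rewrite [X in _ = _ + _ * X]big1 ?mulr0 ?addr0 => [|i _]; last by move/negbFE/eqP: (none i) ->; rewrite mul0r.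
by apply: eq_bigr => i _; move/negbFE/eqP: (none i) ->; rewrite mulr0 addr0.
Qed.

Lemma sum_lift n (i j : 'I_n.+1) (P : pred 'S_n.+1) (F : 'S_n.+1 -> R) :
  \sum_(s : 'S_n.+1 | (s i == j) && P s) F s = \sum_(s' : 'S_n | P (lift_perm i j s')) F (lift_perm i j s').
Proof.
rewrite (reindex (lift_perm i j)); last first.
  pose ulsf i (s : 'S_n.+1) k := odflt k (unlift (s i) (s (lift i k))).
  have ulsfK i' (s : 'S_n.+1) k: lift (s i') (ulsf i' s k) = s (lift i' k).
    rewrite /ulsf; have:= neq_lift i' k.
    by rewrite -(can_eq (permK s)) => /unlift_some[] ? ? ->.
  have inj_ulsf: injective (ulsf i _).
    move=> s; apply: can_inj (ulsf (s i) s^-1%g) _ => k'.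
    by rewrite {1}/ulsf ulsfK !permK liftK.
  exists (fun s => perm (inj_ulsf s)) => [s _ | s].
    by apply/permP=> k'; rewrite permE /ulsf lift_perm_lift lift_perm_id liftK.
  move=> /andP[/eqP si0 _]; apply/permP=> k.
  case: (unliftP i k) => [k'|] ->; rewrite ?lift_perm_id //.
  by rewrite lift_perm_lift -si0 permE ulsfK.
by apply: eq_bigl => s; rewrite lift_perm_id eqxx.
Qed.

Lemma big_lift_neq n (i : 'I_n.+1) (G : 'I_n.+1 -> R) :
  \prod_(l | l != i) G l = \prod_(l < n) G (lift i l).
Proof.
rewrite (reindex_omap (lift i) (unlift i)) /=.
  by apply: eq_bigl => l; rewrite liftK eqxx eq_sym neq_lift.
by move=> l; case: unliftP => [k ->|->]; rewrite ?eqxx.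
Qed.

Lemma bump_ev (i l a : nat) : (a == i.*2) || (a == i.*2.+1) ->
  bump a (bump i.*2 l.*2) = (bump i l).*2.
Proof. rewrite /bump => /orP [] /eqP ->; case: (leqP i l) => h /=; lia. Qed.
Lemma bump_od (i l a : nat) : (a == i.*2) || (a == i.*2.+1) ->
  bump a (bump i.*2 l.*2.+1) = (bump i l).*2.+1.
Proof. rewrite /bump => /orP [] /eqP ->; case: (leqP i l) => h /=; lia. Qed.

Lemma e2_proof m (i : 'I_m.+1) : (i.*2 < (m.*2).+1)%N.
Proof. by rewrite ltnS leq_double -ltnS. Qed.

Section Block.
Variable m : nat.

Definition e2 (i : 'I_m.+1) : 'I_(m.*2).+1 := Ordinal (e2_proof i).
Definition phi (i0 : 'I_m.+1) (a : 'I_(m.*2)) : 'I_(m.+1.*2) :=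
  lift (od i0 : 'I_(m.*2).+2) (lift (e2 i0) a).
Definition Emx (i0 : 'I_m.+1) : 'M[R]_(m.+1.*2) :=
  \matrix_(x, y) (((x == ev i0) && (y == od i0))%:R - ((x == od i0) && (y == ev i0))%:R).
Definition del (i0 : 'I_m.+1) (B : 'M[R]_(m.+1.*2)) : 'M[R]_(m.*2) :=
  \matrix_(a, b) B (phi i0 a) (phi i0 b).

Lemma odd_e2 (i : 'I_m.+1) : odd (e2 i) = false.
Proof. exact: odd_double. Qed.

Lemma ev_lift (i : 'I_m.+1) : ev i = lift (od i : 'I_(m.*2).+2) (e2 i).
Proof. by apply: val_inj => /=; rewrite /bump ltnn. Qed.
Lemma od_lift (i : 'I_m.+1) : od i = lift (ev i : 'I_(m.*2).+2) (e2 i).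
Proof. by apply: val_inj => /=; rewrite /bump leqnn. Qed.

Lemma pos_ev (i : 'I_m.+1) (a : 'I_(m.*2).+2) (l : 'I_m) :
  (a == ev i) || (a == od i) -> ev (lift i l) = lift a (lift (e2 i) (ev l)).
Proof.
move=> ha; apply: val_inj => /=; by rewrite bump_ev.
Qed.
Lemma pos_od (i : 'I_m.+1) (a : 'I_(m.*2).+2) (l : 'I_m) :
  (a == ev i) || (a == od i) -> od (lift i l) = lift a (lift (e2 i) (od l)).
Proof.
move=> ha; apply: val_inj => /=; by rewrite bump_od.
Qed.

Lemma sum_orient (i i0 : 'I_m.+1) (a b : 'I_(m.*2).+2) (F : 'S_(m.*2).+2 -> R) :
  b = lift a (e2 i) ->
  \sum_(s : 'S_(m.*2).+2 | (s a == od i0) && (s b == ev i0)) F s =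
  \sum_(s' : 'S_(m.*2)) F (lift_perm a (od i0) (lift_perm (e2 i) (e2 i0) s')).
Proof.
move=> hb; rewrite (sum_lift a (od i0) (fun s => s b == ev i0)) /=.
rewrite (eq_bigl (fun s' : 'S_(m.*2).+1 => (s' (e2 i) == e2 i0) && true)) => [|s']; last first.
  by rewrite hb lift_perm_lift ev_lift (inj_eq lift_inj) andbT.
by rewrite (sum_lift (e2 i) (e2 i0) xpredT).
Qed.

End Block.
End Work.


Section W.
Variable R : realType.
Variable m : nat.
Local Notation Emx := (@Emx R m).
Lemma orient_ps (B : 'M[R]_(m.+1.*2)) (i i0 : 'I_m.+1) (a b : 'I_(m.*2).+2) :
  (a == ev i) || (a == od i) -> b = lift a (e2 i) ->
  \sum_(s : 'S_(m.*2).+2 | (s a == od i0) && (s b == ev i0))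
     (-1) ^+ s * \prod_(l | l != i) B (s (ev l)) (s (od l))
  = (-1) ^+ (~~ odd a) * ps (del i0 B).
Proof.
move=> ha hb. rewrite (sum_orient _ _ hb) /ps big_distrr. apply: eq_bigr => s' _.
rewrite !odd_lift_perm odd_od !odd_e2.
have -> : odd a (+) true (+) (false (+) false (+) s') = (~~ odd a) (+) s' by case: (odd a); case: (odd_perm s').
rewrite signr_addb -mulrA; congr (_ * (_ * _)).
rewrite big_lift_neq; apply: eq_bigr => l _.
by rewrite mxE (pos_ev l ha) (pos_od l ha) !lift_perm_lift.
Qed.


Lemma caseE (b1 b2 : bool) (x y : R) :
  x * ((b1%:R - b2%:R) * y) = (if b1 then x * y else 0) - (if b2 then x * y else 0).
Proof. by case: b1; case: b2 => /=; ring. Qed.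

Lemma C_i (B : 'M[R]_(m.+1.*2)) (i i0 : 'I_m.+1) :
  \sum_(s : 'S_(m.*2).+2) (-1) ^+ s *
     (Emx i0 (s (ev i)) (s (od i)) * \prod_(l | l != i) B (s (ev l)) (s (od l)))
  = 2%:R * ps (del i0 B).
Proof.
pose G (s : 'S_(m.*2).+2) := (-1) ^+ s * \prod_(l | l != i) B (s (ev l)) (s (od l)).
transitivity (\sum_(s : 'S_(m.*2).+2 | (s (od i) == od i0) && (s (ev i) == ev i0)) G s
   - \sum_(s : 'S_(m.*2).+2 | (s (ev i) == od i0) && (s (od i) == ev i0)) G s).
  rewrite (big_mkcond (fun s : 'S_(m.*2).+2 => (s (od i) == od i0) && (s (ev i) == ev i0))).
  rewrite (big_mkcond (fun s : 'S_(m.*2).+2 => (s (ev i) == od i0) && (s (od i) == ev i0))) -sumrB.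
  apply: eq_bigr => s _; rewrite mxE [(s (od i) == od i0) && _]andbC /G.
  exact: caseE.
rewrite /G (@orient_ps B i i0 (od i) (ev i)); [| by rewrite eqxx orbT | exact: ev_lift].
rewrite (@orient_ps B i i0 (ev i) (od i)); [| by rewrite eqxx | exact: od_lift].
rewrite odd_od odd_ev /=.
by rewrite expr1 expr0 mul1r mulN1r opprK mulr2n mulrDl mul1r.
Qed.

Lemma ev_inj' n : injective (@ev n).
Proof. by move=> i j /(congr1 val) /= /double_inj /val_inj. Qed.
Lemma ev_neq_od n (i j : 'I_n) : ev i != od j.
Proof. by apply/negP => /eqP /(congr1 (fun x : 'I_(n.*2) => odd x)); rewrite odd_ev odd_od. Qed.

Lemma hitE (s : 'S_(m.*2).+2) (i i0 : 'I_m.+1) : Emx i0 (s (ev i)) (s (od i)) != 0 ->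
  ((s (ev i) == ev i0) && (s (od i) == od i0)) || ((s (ev i) == od i0) && (s (od i) == ev i0)).
Proof. by rewrite mxE; case: (_ && _); case: (_ && _); rewrite ?subrr ?eqxx. Qed.

Lemma atmost (s : 'S_(m.*2).+2) (i0 i j : 'I_m.+1) : i != j ->
  Emx i0 (s (ev i)) (s (od i)) != 0 -> Emx i0 (s (ev j)) (s (od j)) = 0.
Proof.
move=> nij nzi; apply/eqP; apply: contraTT nij => nzj.
rewrite negbK; move: (hitE nzi) (hitE nzj).
case/orP => /andP[/eqP ei /eqP oi]; case/orP => /andP[/eqP ej /eqP oj].
- by rewrite -ej in ei; rewrite (@ev_inj' m.+1 i j (perm_inj ei)) eqxx.
- by rewrite -oj in ei; move: (@ev_neq_od m.+1 i j); rewrite (perm_inj ei) eqxx.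
- by rewrite -oj in ei; move: (@ev_neq_od m.+1 i j); rewrite (perm_inj ei) eqxx.
- by rewrite -ej in ei; rewrite (@ev_inj' m.+1 i j (perm_inj ei)) eqxx.
Qed.

Lemma ps_block (B : 'M[R]_(m.+1.*2)) (i0 : 'I_m.+1) (t : R) :
  ps (B + t *: Emx i0) = ps B + t * (m.+1)%:R * 2%:R * ps (del i0 B).
Proof.
rewrite [ps (B + _)]/ps [ps B]/ps.
transitivity (\sum_(s : 'S_(m.*2).+2) (-1)^+s * (\prod_(i < m.+1) B (s (ev i)) (s (od i))
   + t * \sum_(i < m.+1) Emx i0 (s (ev i)) (s (od i)) * \prod_(l | l != i) B (s (ev l)) (s (od l)))).
  apply: eq_bigr => s _; congr (_ * _).
  rewrite -(@prod_add1 R 'I_m.+1 (fun i : 'I_m.+1 => B (s (ev i)) (s (od i)))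
                      (fun i => Emx i0 (s (ev i)) (s (od i))) t); last exact: atmost.
  by apply: eq_bigr => i _; rewrite !mxE.
under eq_bigr do rewrite mulrDr.
rewrite big_split; congr (_ + _).
under eq_bigr do rewrite mulrCA mulr_sumr.
rewrite -mulr_sumr exchange_big.
under eq_bigr do rewrite C_i.
rewrite sumr_const card_ord -mulr_natl; ring.
Qed.
End W.


Section W4.
Variable R : realType.
Definition Z (m : nat) : R := 2 ^+ m * m`!%:R.

Lemma PfaffE_ps m (B : 'M[R]_(m.*2)) : Pfaff B = (Z m)^-1 * ps B.
Proof. by rewrite -pfsum_ps /Pfaff doubleK. Qed.

Lemma mxn_lt N (B : 'M[R]_N) i j (hi : (i < N)%N) (hj : (j < N)%N) :
  mxn B i j = B (Ordinal hi) (Ordinal hj).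
Proof. by rewrite /mxn (insubT (fun k => k < N)%N hi) (insubT (fun k => k < N)%N hj). Qed.

Lemma mxn_ord N (B : 'M[R]_N) (a b : 'I_N) : mxn B a b = B a b.
Proof. by rewrite /mxn !valK. Qed.

Lemma Pfaff_eq N1 N2 (B1 : 'M[R]_N1) (B2 : 'M[R]_N2) : N1 = N2 ->
  (forall i j, (i < N1)%N -> (j < N1)%N -> mxn B1 i j = mxn B2 i j) -> Pfaff B1 = Pfaff B2.
Proof.
move=> e H; subst N2; congr Pfaff; apply/matrixP => a b.
by have := H a b (ltn_ord a) (ltn_ord b); rewrite !mxn_ord.
Qed.

Definition mxL (f : nat -> nat -> R) (L : seq nat) : 'M[R]_(size L) :=
  \matrix_(a, b) f (nth 0%N L a) (nth 0%N L b).
Definition PfL f L := Pfaff (mxL f L).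

Lemma mxn_fun N (G : nat -> nat -> R) i j : (i < N)%N -> (j < N)%N ->
  mxn (\matrix_(a < N, b < N) G a b) i j = G i j.
Proof. by move=> hi hj; rewrite (mxn_lt _ hi hj) mxE. Qed.

Lemma mxn_mxL f L i j : (i < size L)%N -> (j < size L)%N ->
  mxn (mxL f L) i j = f (nth 0%N L i) (nth 0%N L j).
Proof. by move=> hi hj; rewrite (mxn_lt _ hi hj) mxE. Qed.

Lemma PfL_ext f g L : (forall x y, x \in L -> y \in L -> f x y = g x y) -> PfL f L = PfL g L.
Proof. by move=> H; rewrite /PfL /mxL; congr Pfaff; apply/matrixP => a b; rewrite !mxE H // mem_nth. Qed.


Definition dlt (p q x y : nat) : R := ((x == p) && (y == q))%:R - ((x == q) && (y == p))%:R.

Lemma nth_bump (L1 L2 : seq nat) p q k i : size L1 = k.*2 ->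
  nth 0%N (L1 ++ p :: q :: L2) (bump k.*2.+1 (bump k.*2 i)) = nth 0%N (L1 ++ L2) i.
Proof.
move=> h1; rewrite !nth_cat h1.
case: (leqP k.*2 i) => hi.
  have -> : bump k.*2.+1 (bump k.*2 i) = i.+2 by rewrite /bump; lia.
  have -> : (i.+2 < k.*2)%N = false by apply/negbTE; rewrite -leqNgt; lia.
  by have -> : (i.+2 - k.*2 = (i - k.*2).+2)%N by lia.
have -> : bump k.*2.+1 (bump k.*2 i) = i by rewrite /bump; lia.
by rewrite hi.
Qed.

Lemma Z_succ m : Z m.+1 = Z m * (m.+1)%:R * 2%:R.
Proof. by rewrite /Z exprS factS natrM; ring. Qed.

Lemma Z_neq0 m : Z m != 0.
Proof. by rewrite /Z mulf_neq0 ?expf_neq0 ?pnatr_eq0 // -lt0n fact_gt0. Qed.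

Lemma PfL_block f L1 L2 p q t : ~~ odd (size L1) -> ~~ odd (size L2) ->
  uniq (L1 ++ p :: q :: L2) ->
  PfL (fun x y => f x y + t * dlt p q x y) (L1 ++ p :: q :: L2)
  = PfL f (L1 ++ p :: q :: L2) + t * PfL f (L1 ++ L2).
Proof.
move=> e1 e2 U.
set L := L1 ++ p :: q :: L2.
pose m := ((size L1 + size L2)./2)%N.
have hm : (size L1 + size L2 = m.*2)%N.
  by rewrite /m -{1}(odd_double_half (size L1 + size L2)) oddD (negbTE e1) (negbTE e2).
have hL : size L = m.+1.*2 by rewrite size_cat /= addnS addnS hm.
pose k := ((size L1)./2)%N.
have hk1 : size L1 = k.*2 by rewrite /k -{1}(odd_double_half (size L1)) (negbTE e1).
have hk : (k < m.+1)%N by rewrite ltnS -leq_double -hk1 -hm leq_addr.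
pose i0 : 'I_m.+1 := Ordinal hk.
pose B : 'M[R]_(m.+1.*2) := \matrix_(a, b) f (nth 0%N L a) (nth 0%N L b).
have E1 : PfL f L = Pfaff B.
  apply: Pfaff_eq => // i j hi hj.
  have hi' : (i < m.+1.*2)%N by rewrite -hL.
  have hj' : (j < m.+1.*2)%N by rewrite -hL.
  by rewrite mxn_mxL // (mxn_lt _ hi' hj') mxE.
have E3 : PfL f (L1 ++ L2) = Pfaff (del i0 B).
  apply: Pfaff_eq; first by rewrite size_cat hm.
  move=> i j hi hj; rewrite mxn_mxL //.
  have hi' : (i < m.*2)%N by rewrite -hm -size_cat.
  have hj' : (j < m.*2)%N by rewrite -hm -size_cat.
  by rewrite (mxn_lt _ hi' hj') mxE /B mxE /= /L !(nth_bump _ _ _ _ hk1).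
have hp : nth 0%N L (size L1) = p by rewrite /L nth_cat ltnn subnn.
have hq : nth 0%N L (size L1).+1 = q by rewrite /L nth_cat ltnNge leqnSn /= subSn // subnn.
have hsL : (size L1 < size L)%N by rewrite /L size_cat /= -addSnnS leq_addr.
have hsL' : ((size L1).+1 < size L)%N by rewrite /L size_cat /= addnS ltnS -addSnnS leq_addr.
have E2 : PfL (fun x y => f x y + t * dlt p q x y) L = Pfaff (B + t *: Emx R i0).
  apply: Pfaff_eq => // i j hi hj.
  rewrite mxn_mxL //.
  have hi' : (i < m.+1.*2)%N by rewrite -hL.
  have hj' : (j < m.+1.*2)%N by rewrite -hL.
  rewrite (mxn_lt _ hi' hj') !mxE /dlt.
  rewrite -{1}hp -{1}hq -hp -hq !nth_uniq //.
  by rewrite hk1.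
rewrite E1 E2 E3 !PfaffE_ps ps_block Z_succ.
have := Z_neq0 m; move: (Z m) => z hz.
have hm1 : (m.+1)%:R != 0 :> R by rewrite pnatr_eq0.
have h2 : 2%:R != 0 :> R by rewrite pnatr_eq0.
rewrite !invfM; field.
by rewrite hz /= addrC natr1.
Qed.
End W4.


Section W5.
Variable R : realType.
Variable n : nat.
Implicit Types S T U : {set 'I_n}.

Definition Q S (x : nat) := ~~ [exists i in S, nat_of_ord i == x].

Lemma keptE S : kept_idx S = [seq j <- iota 0 n.*2 | Q S j./2].
Proof. by []. Qed.

Lemma Q_ord S (u : 'I_n) : Q S u = (u \notin S).
Proof.
rewrite /Q; congr negb; apply/existsP/idP => [[i /andP[iS /eqP/val_inj <-]] // | uS].
by exists u; rewrite uS eqxx.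
Qed.

Lemma Q_U1 S (u : 'I_n) (x : nat) : x != u -> Q (u |: S) x = Q S x.
Proof.
move=> xu; rewrite /Q; congr negb; apply/existsP/existsP => [[i /andP[]]|[i /andP[iS ix]]].
  rewrite in_setU1 => /orP[/eqP iu ix|iS ix].
    by move: ix xu; rewrite iu => /eqP ->; rewrite eqxx.
  by exists i; rewrite iS.
by exists i; rewrite in_setU1 iS orbT.
Qed.

Lemma even_filter (P : nat -> bool) a b :
  ~~ odd (size [seq j <- iota a.*2 b.*2 | P j./2]).
Proof.
elim: b => [|b IH]; first by [].
rewrite doubleS -addn2 iotaD filter_cat size_cat oddD (negbTE IH) /=.
have h1 : ((a.*2 + b.*2)./2 = a + b)%N by lia.
have h2 : (uphalf (a.*2 + b.*2) = a + b)%N by lia.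
by rewrite h1 h2; case: (P (a + b)%N).
Qed.

Lemma kept_uniq S : uniq (kept_idx S).
Proof. by rewrite keptE filter_uniq // iota_uniq. Qed.

Lemma kept_split S (u : 'I_n) : u \notin S ->
  let L1 := [seq j <- iota 0 u.*2 | Q S j./2] in
  let L2 := [seq j <- iota (u.+1).*2 ((n - u.+1).*2) | Q S j./2] in
  kept_idx S = L1 ++ (u : nat).*2 :: (u : nat).*2.+1 :: L2 /\
  kept_idx (u |: S) = L1 ++ L2.
Proof.
move=> uS L1 L2.
have hn : n.*2 = (u.*2 + (2 + (n - u.+1).*2))%N by have := ltn_ord u; lia.
have hu2 : (u.*2 + 2 = (u.+1).*2)%N by lia.
rewrite !keptE hn !iotaD !filter_cat !add0n hu2 /=.
have h1 : (u.*2)./2 = u by lia.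
have h2 : uphalf (u.*2) = u by lia.
rewrite h1 h2 Q_ord uS; split => //.
rewrite (Q_ord (u |: S) u) in_setU1 eqxx /=.
congr (_ ++ _); apply: eq_in_filter => j; rewrite mem_iota => /andP[hj1 hj2].
  by rewrite Q_U1 //; apply/eqP; lia.
by rewrite Q_U1 //; apply/eqP; lia.
Qed.


Definition Dl U (x y : nat) : R := \sum_(u in U) dlt R (val u).*2 (val u).*2.+1 x y.

Lemma sum_split (F : {set 'I_n} -> R) U u : u \in U ->
  \sum_(T : {set 'I_n} | T \subset U) F T =
  \sum_(T : {set 'I_n} | T \subset U :\ u) F T + \sum_(T : {set 'I_n} | T \subset U :\ u) F (u |: T).
Proof.
move=> uU; rewrite (bigID (fun T : {set 'I_n} => u \in T)) /= addrC; congr (_ + _).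
  by apply: eq_bigl => T; rewrite subsetD1.
rewrite (reindex_onto (fun T : {set 'I_n} => u |: T) (fun T : {set 'I_n} => T :\ u)) /= => [|T /andP[_ uT]]; last first.
  by rewrite setD1K.
apply: eq_bigl => T; rewrite subsetD1 subUset sub1set uU setU11 /= andbT.
congr (_ && _); case: (boolP (u \in T)) => uT /=.
  by apply/negbTE/negP => /eqP e; move: uT; rewrite -e setD11.
by rewrite setU1K // eqxx.
Qed.

Lemma claim (f : nat -> nat -> R) t k : forall U S, #|U| = k ->
  (forall v, v \in U -> v \notin S) ->
  PfL (fun x y => f x y + t * Dl U x y) (kept_idx S) =
  \sum_(T : {set 'I_n} | T \subset U) t ^+ #|T| * PfL f (kept_idx (S :|: T)).
Proof.
elim: k => [|k IH] U S hU hd.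
  have -> : U = set0 by apply: cards0_eq.
  rewrite (big_pred1 set0) => [|T]; last by rewrite subset0.
  rewrite setU0 cards0 expr0 mul1r; apply: PfL_ext => x y _ _.
  by rewrite /Dl big_set0 mulr0 addr0.
have : (0 < #|U|)%N by rewrite hU.
case/card_gt0P => u uU.
have hU' : #|U :\ u| = k by move: hU; rewrite (cardsD1 u) uU add1n => -[].
have uS : u \notin S := hd u uU.
move: (kept_split uS) => /= [eS eU].
transitivity (PfL (fun x y => (f x y + t * Dl (U :\ u) x y)
                  + t * dlt R (val u).*2 (val u).*2.+1 x y) (kept_idx S)).
  apply: PfL_ext => x y _ _; rewrite /Dl (bigD1 u) //=.
  rewrite (eq_bigl (fun i => i \in U :\ u)) => [|i]; last by rewrite in_setD1 andbC.
  by rewrite mulrDr addrA addrAC.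
rewrite eS PfL_block; first last.
- by rewrite -eS kept_uniq.
- exact: even_filter.
- exact: (even_filter _ 0 u).
rewrite -eS -eU.
rewrite (IH (U :\ u) S hU') => [| v]; last by rewrite in_setD1 => /andP[_ /hd].
rewrite (IH (U :\ u) (u |: S) hU') => [| v]; last first.
  by rewrite in_setD1 in_setU1 => /andP[vu vU]; rewrite negb_or vu hd.
rewrite (sum_split _ uU) mulr_sumr; congr (_ + _); apply: eq_bigr => T hT.
have uT : u \notin T by move: hT; rewrite subsetD1 => /andP[_ ->].
rewrite cardsU1 uT add1n exprS -mulrA; congr (_ * (_ * _)).
by rewrite [S :|: _]setUCA setUA.
Qed.
End W5.


Section W6.
Variable R : realType.
Variable n : nat.

Lemma sum_single (F : 'I_n -> R) (h : 'I_n) :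
  (forall v, v != h -> F v = 0) -> \sum_(u in [set: 'I_n]) F u = F h.
Proof.
move=> H; rewrite (bigD1 h) ?inE //= big1 ?addr0 // => v /andP[_ vh]; exact: H.
Qed.

Lemma J_Dl x y (hx : (x < n.*2)%N) (hy : (y < n.*2)%N) :
  Jmx R n (Ordinal hx) (Ordinal hy) = Dl R [set: 'I_n] x y.
Proof.
have hh : (x./2 < n)%N by lia.
pose h : 'I_n := Ordinal hh.
rewrite /Dl (@sum_single (fun u => dlt R (val u).*2 (val u).*2.+1 x y) h); last first.
  move=> v vh.
  have vh' : val v != x./2 by [].
  rewrite /dlt.
  have -> : (x == (val v).*2) = false by apply/negbTE/eqP => e; move/eqP: vh'; lia.
  have -> : (x == (val v).*2.+1) = false by apply/negbTE/eqP => e; move/eqP: vh'; lia.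
  by rewrite /= subrr.
rewrite mxE /dlt /=.
have -> : (x == (x./2).*2) = ~~ odd x by apply/eqP/idP; lia.
have -> : (x == (x./2).*2.+1) = odd x by apply/eqP/idP; lia.
have -> : (y == (x./2).*2.+1) = (x./2 == y./2) && odd y by apply/eqP/andP; lia.
have -> : (y == (x./2).*2) = (x./2 == y./2) && ~~ odd y by apply/eqP/andP; lia.
by case: (odd x); case: (odd y); case: (_ == _); rewrite /=; ring.
Qed.

Lemma kept0 : kept_idx (set0 : {set 'I_n}) = iota 0 n.*2.
Proof.
rewrite keptE (eq_filter (a2 := predT)) ?filter_predT // => j.
by rewrite /Q; apply/negP => /existsP[i]; rewrite in_set0.
Qed.

Lemma keptT : kept_idx [set: 'I_n] = [::].
Proof.
rewrite keptE (eq_in_filter (a2 := pred0)) ?filter_pred0 // => j.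
rewrite mem_iota add0n => /andP[_ hj].
have hh : (j./2 < n)%N by lia.
by rewrite (Q_ord _ (Ordinal hh)) inE.
Qed.

Lemma Pf0 (B : 'M[R]_0) : Pfaff B = 1.
Proof.
rewrite /Pfaff /= expr0 mul1r invr1 mul1r (big_pred1 1%g) ?odd_perm1 ?big_ord0 ?mulr1 //.
by move=> s; symmetry; apply/eqP/permP => i; case: i.
Qed.

Lemma Pf_expand (A : 'M[R]_(n.*2)) t :
  Pfaff (A + t *: Jmx R n) =
  \sum_(T : {set 'I_n} | T \subset [set: 'I_n]) t ^+ #|T| * PfL (mxn A) (kept_idx T).
Proof.
have -> : Pfaff (A + t *: Jmx R n) =
    PfL (fun x y => mxn A x y + t * Dl R [set: 'I_n] x y) (kept_idx (set0 : {set 'I_n})).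
  apply: Pfaff_eq; first by rewrite kept0 size_iota.
  move=> i j hi hj; rewrite mxn_mxL ?kept0 ?size_iota // !nth_iota // !add0n.
  by rewrite !(mxn_lt _ hi hj) -(J_Dl hi hj) !mxE.
apply: eq_trans (@claim R n (mxn A) t n [set: 'I_n] set0 _ _) _.
- by rewrite cardsT card_ord.
- by move=> v _; rewrite in_set0.
by apply: eq_bigr => T _; rewrite set0U.
Qed.

Lemma group_card (F : {set 'I_n} -> R) t :
  \sum_(T : {set 'I_n} | T \subset [set: 'I_n]) t ^+ #|T| * F T =
  \sum_(k < n.+1) t ^+ k * \sum_(T : {set 'I_n} | #|T| == k) F T.
Proof.
rewrite (partition_big (fun T : {set 'I_n} => (inord #|T| : 'I_n.+1)) xpredT) //=.
apply: eq_bigr => k _; rewrite mulr_sumr.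
have hc (T : {set 'I_n}) : (#|T| < n.+1)%N by have := max_card (mem T); rewrite card_ord.
apply: eq_big => T.
  by rewrite subsetT /= -(inj_eq val_inj) /= inordK.
by move=> /andP[_ /eqP <-]; rewrite inordK.
Qed.

Lemma Pf_congr (B P : 'M[R]_(n.*2)) : Pfaff (P^T *m B *m P) = \det P * Pfaff B.
Proof. by rewrite !PfaffE_ps ps_congr mulrCA. Qed.

Lemma sk_expand (A : 'M[R]_(n.*2)) t :
  \sum_(k < n.+1) t ^+ k * s_k k A = Pfaff (A + t *: Jmx R n).
Proof. by rewrite Pf_expand group_card. Qed.

Lemma sk_n (A : 'M[R]_(n.*2)) : s_k n A = 1.
Proof.
rewrite /s_k (big_pred1 [set: 'I_n]) => [|T]; last first.
  rewrite /= eqEcard subsetT cardsT card_ord /= eqn_leq.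
  by have := max_card (mem T); rewrite card_ord => ->.
rewrite (Pfaff_eq (B2 := (1%:M : 'M[R]_0))) ?Pf0 //; first by rewrite keptT.
by move=> i j; rewrite [in X in X -> _]keptT.
Qed.
End W6.


Theorem theorem2p8 (R : realType) (n k : nat) (A P : 'M[R]_(n.*2)) :
  A^T = - A -> \det A != 0 -> (k < n)%N ->
  P^T *m Jmx R n *m P = Jmx R n ->
  s_k k (P^T *m A *m P) = s_k k A.
Proof.
move=> _ _ hk hP.
set A' := P^T *m A *m P.
have key t : \sum_(i < n.+1) t ^+ i * s_k i A' = \det P * \sum_(i < n.+1) t ^+ i * s_k i A.
  have e : P^T *m (A + t *: Jmx R n) *m P = A' + t *: Jmx R n.
    by rewrite mulmxDr mulmxDl -scalemxAr -scalemxAl hP.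
  by rewrite !sk_expand -e Pf_congr.
pose p := \poly_(i < n.+1) (s_k i A' - \det P * s_k i A).
have p0 : p = 0.
  apply: (@roots_geq_poly_eq0 _ p [seq i%:R | i <- iota 0 n.+1]).
  - apply/allP => x _; rewrite /root horner_poly.
    rewrite (eq_bigr (fun i : 'I_n.+1 => x ^+ i * s_k i A' - \det P * (x ^+ i * s_k i A))).
      by rewrite sumrB -mulr_sumr key subrr.
    by move=> i _; rewrite mulrBl mulrC -mulrA [s_k i A * _]mulrC.
  - rewrite map_inj_uniq ?iota_uniq // => i j /eqP; rewrite eqr_nat => /eqP.
    done.
  - by rewrite size_map size_iota size_poly.
have coef i : (i < n.+1)%N -> s_k i A' = \det P * s_k i A.
  move=> hi; move: (congr1 (fun q : {poly R} => q`_i) p0).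
  by rewrite coef_poly hi coef0 => /eqP; rewrite subr_eq0 => /eqP.
have dP : \det P = 1 by have := coef n (leqnn _); rewrite !sk_n mulr1 => <-.
by rewrite coef ?dP ?mul1r // ltnW.
Qed.
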